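(* Let $W\in\mathbb{R}^{k\times k}$ and $\alpha\in(0,\gamma_2(W))$. There is $\ell\in\mathbb{N}$ with $\ell\lesssim\frac{\gamma_2(W)^2\log k}{\alpha^2}$ such that $\gamma_2^\ell(W;\alpha)\lesssim\gamma_2(W)$ (where $\lesssim$ means up to a universal constant factor).
   Context: $\|A\|_{1\to2}$ is the maximum Euclidean column norm, $\|A\|_\infty$ the maximum absolute entry. $\gamma_2(W)=\min_{L^TR=W}\|L\|_{1\to2}\|R\|_{1\to2}$ over matrices $L,R$ with any number of rows; $\gamma_2^\ell(W)$ is the same minimum restricted to $L,R\in\mathbb{R}^{\ell\times k}$; $\gamma_2^\ell(W;\alpha)=\min_{\|\tilde W-W\|_\infty\le\alpha}\gamma_2^\ell(\tilde W)$. *)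

(* Defs.v *)
From HB Require Import structures.
From mathcomp Require Import all_boot all_order all_algebra.
From mathcomp Require Import all_classical all_reals all_analysis.
Set Implicit Arguments. Unset Strict Implicit. Unset Printing Implicit Defensive.
Import Order.TTheory GRing.Theory Num.Theory.
Local Open Scope classical_set_scope.
Local Open Scope ring_scope.

Definition norm12 {R : realType} {m n : nat} (A : 'M[R]_(m, n)) : R :=
  \big[Num.max/0]_(j < n) Num.sqrt (\sum_(i < m) A i j ^+ 2).

(* gamma_2(W): infimum over factorizations L^T R = W with any number l of rows.
   The set is nonempty (l = k, L = 1, R = W) and bounded below by 0. *)
Definition gamma2 {R : realType} {k : nat} (W : 'M[R]_k) : R :=
  inf [set x : R | exists (l : nat) (L Rm : 'M[R]_(l, k)),
         L^T *m Rm = W /\ x = norm12 L * norm12 Rm].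

(* gamma_2^l(W): same, restricted to l rows; +oo if no such factorization. *)
Definition gamma2l {R : realType} {k : nat} (l : nat) (W : 'M[R]_k) : \bar R :=
  ereal_inf [set x : \bar R | exists (L Rm : 'M[R]_(l, k)),
         L^T *m Rm = W /\ x = (norm12 L * norm12 Rm)%:E].

Definition gamma2la {R : realType} {k : nat} (l : nat) (W : 'M[R]_k) (a : R) : \bar R :=
  ereal_inf [set gamma2l l Wt | Wt in
     [set Wt : 'M[R]_k | forall i j, `|Wt i j - W i j| <= a]].

(* Main.v *)
Require Import Defs.
From HB Require Import structures.
From mathcomp Require Import all_boot all_order all_algebra.
From mathcomp Require Import all_classical all_reals all_analysis.
From mathcomp Require Import ring lra.
Import Order.TTheory GRing.Theory Num.Theory.
Local Open Scope ring_scope.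

(* Proof: random-sign (Rademacher) sketch
   with truncation, Bernstein-type Chernoff bound and a union bound. *)



Definition sgb {R : realType} (b : bool) : R := if b then 1 else -1.
Definition flipf {d : nat} (a : 'I_d) (s : {ffun 'I_d -> bool}) : {ffun 'I_d -> bool} :=
  [ffun i => if i == a then ~~ s i else s i].

Lemma flipfK d (a : 'I_d) : involutive (flipf a).
Proof. by move=> s; apply/ffunP=> i; rewrite !ffunE; case: (i == a) => //; rewrite negbK. Qed.

Lemma sgb2 (R : realType) b : sgb b * sgb b = 1 :> R.
Proof. by case: b; rewrite /sgb ?mulr1 ?mulrNN ?mulr1. Qed.

Lemma flipf_a (R : realType) d (a : 'I_d) s : sgb (flipf a s a) = - sgb (s a) :> R.
Proof. by rewrite ffunE eqxx; case: (s a); rewrite /= /sgb ?opprK. Qed.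

Lemma flipf_b (R : realType) d (a b : 'I_d) s : b != a -> sgb (flipf a s b) = sgb (s b) :> R.
Proof. by move=> /negbTE h; rewrite ffunE h. Qed.

Lemma sum_odd (R : realType) d (a : 'I_d) (g : {ffun 'I_d -> bool} -> R) :
  (forall s, g (flipf a s) = - g s) -> \sum_s g s = 0.
Proof.
move=> h.
have e : \sum_s g s = \sum_s g (flipf a s).
  by rewrite (reindex_inj (inv_inj (@flipfK d a))).
have : \sum_s g s = - \sum_s g s by rewrite {1}e -sumrN; apply: eq_bigr => s _; rewrite h.
move=> e2; have : 2 * \sum_s g s = 0 by rewrite mulr2n mulrDl mul1r {1}e2 addNr.
by move/eqP; rewrite mulf_eq0 pnatr_eq0 /= => /eqP.
Qed.

Definition Mc (R : realType) d : R := #|{ffun 'I_d -> bool}|%:R.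

Lemma E2 (R : realType) d (a b : 'I_d) :
  \sum_(s : {ffun 'I_d -> bool}) sgb (s a) * sgb (s b) = Mc R d * (a == b)%:R.
Proof.
have [->|ne] := eqVneq a b.
  rewrite mulr1 (eq_bigr (fun _ => 1)) ?sumr_const //.
  by move=> s _; rewrite sgb2.
rewrite mulr0; apply: (@sum_odd R d a) => s.
rewrite flipf_a flipf_b ?mulNr //; by rewrite eq_sym.
Qed.

Lemma E4 (R : realType) d (a b c e : 'I_d) :
  \sum_(s : {ffun 'I_d -> bool}) sgb (s a) * sgb (s b) * sgb (s c) * sgb (s e) =
  Mc R d * (((a, b) == (c, e))%:R + ((b, a) == (c, e))%:R
     + (a == b)%:R * (c == e)%:R - 2 * ((a == b) && (a == c) && (a == e))%:R).
Proof.
have [<-|nab] := eqVneq a b.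
  rewrite (eq_bigr (fun s : {ffun 'I_d -> bool} => sgb (s c) * sgb (s e) : R)); last first.
    by move=> s _; rewrite sgb2 mul1r.
  rewrite E2 !xpair_eqE /=. ring.
have [<-|nac] := eqVneq a c.
  rewrite (eq_bigr (fun s : {ffun 'I_d -> bool} => sgb (s b) * sgb (s e) : R)); last first.
    by move=> s _; rewrite [X in X * _]mulrAC sgb2 mul1r.
  rewrite E2 !xpair_eqE /= eqxx (eq_sym b a) (negbTE nab) /=. ring.
have [<-|nae] := eqVneq a e.
  rewrite (eq_bigr (fun s : {ffun 'I_d -> bool} => sgb (s b) * sgb (s c) : R)); last first.
    by move=> s _; rewrite mulrC !mulrA sgb2 mul1r.
  rewrite E2 !xpair_eqE /= (negbTE nac) eqxx andbT /=. ring.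
rewrite !xpair_eqE (negbTE nac) (negbTE nae) /= andbF /=.
rewrite (@sum_odd R d a); first ring.
move=> s; rewrite flipf_a !flipf_b 1?eq_sym //; lra.
Qed.

Definition Xs {R : realType} {d : nat} (u : 'I_d -> R) (s : {ffun 'I_d -> bool}) : R :=
  \sum_a sgb (s a) * u a.

Lemma sum_delta (R : realType) (T : finType) (p : T) (F : T -> R) :
  \sum_q F q * (p == q)%:R = F p.
Proof.
rewrite (bigD1 p) //= eqxx mulr1 big1 ?addr0 // => q /negbTE.
by rewrite eq_sym => ->; rewrite mulr0.
Qed.

Lemma M2 (R : realType) d (u v : 'I_d -> R) :
  \sum_s Xs u s * Xs v s = Mc R d * \sum_a u a * v a.
Proof.
rewrite /Xs.
under eq_bigr do rewrite big_distrlr /=.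
rewrite exchange_big /=.
under eq_bigr do rewrite exchange_big /=.
rewrite mulr_sumr; apply: eq_bigr => a _.
under eq_bigr => b _.
  rewrite (eq_bigr (fun s : {ffun 'I_d -> bool} => (u a * v b) * (sgb (s a) * sgb (s b)))); last first.
    by move=> s _; ring.
  rewrite -mulr_sumr E2.
  over.
rewrite /= (eq_bigr (fun b => (Mc R d * (u a * v b)) * (a == b)%:R)); last by move=> b _; ring.
by rewrite sum_delta.
Qed.

Lemma sqr_sum_pair (R : realType) d (G : 'I_d -> R) :
  (\sum_a G a) ^+ 2 = \sum_(p : 'I_d * 'I_d) G p.1 * G p.2.
Proof. by rewrite expr2 big_distrlr /= pair_big. Qed.

Lemma M4 (R : realType) d (u : 'I_d -> R) :
  \sum_s Xs u s ^+ 4 <= 3 * Mc R d * (\sum_a u a ^+ 2) ^+ 2.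
Proof.
pose g (s : {ffun 'I_d -> bool}) (p : 'I_d * 'I_d) := sgb (s p.1) * u p.1 * (sgb (s p.2) * u p.2).
have X2 s : Xs u s ^+ 2 = \sum_p g s p by rewrite /Xs sqr_sum_pair.
pose u4 (p q : 'I_d * 'I_d) := u p.1 * u p.2 * u q.1 * u q.2.
have e1 : \sum_s Xs u s ^+ 4 = \sum_p \sum_q u4 p q * Mc R d *
     ((p == q)%:R + ((p.2, p.1) == q)%:R + (p.1 == p.2)%:R * (q.1 == q.2)%:R
       - 2 * ((p.1 == p.2) && (p.1 == q.1) && (p.1 == q.2))%:R).
  under eq_bigr do rewrite (_ : 4 = 2 * 2)%N // exprM X2 expr2 big_distrlr /=.
  rewrite exchange_big /=; apply: eq_bigr => p _.
  rewrite exchange_big /=; apply: eq_bigr => q _.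
  rewrite (eq_bigr (fun s : {ffun 'I_d -> bool} => u4 p q *
     (sgb (s p.1) * sgb (s p.2) * sgb (s q.1) * sgb (s q.2)))); last first.
    by move=> s _; rewrite /g /u4; ring.
  rewrite -mulr_sumr E4 -mulrA; congr (_ * (_ * _)).
idtac.
have sA : \sum_p \sum_q u4 p q * (p == q)%:R = (\sum_a u a ^+ 2) ^+ 2.
  rewrite sqr_sum_pair; apply: eq_bigr => p _; rewrite sum_delta /u4; ring.
have sB : \sum_p \sum_q u4 p q * ((p.2, p.1) == q)%:R = (\sum_a u a ^+ 2) ^+ 2.
  rewrite sqr_sum_pair; apply: eq_bigr => p _; rewrite sum_delta /u4 /=; ring.
have sC : \sum_p \sum_q u4 p q * ((p.1 == p.2)%:R * (q.1 == q.2)%:R) = (\sum_a u a ^+ 2) ^+ 2.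
  have h : \sum_(p : 'I_d * 'I_d) u p.1 * u p.2 * (p.1 == p.2)%:R = \sum_a u a ^+ 2.
    rewrite -(pair_big xpredT xpredT (fun a b => u a * u b * (a == b)%:R)) /=.
    apply: eq_bigr => a _; rewrite (eq_bigr (fun b => u a * u b * (a == b)%:R)) //.
    by rewrite sum_delta expr2.
  rewrite -h expr2 big_distrl /=; apply: eq_bigr => p _.
  rewrite big_distrr /=; apply: eq_bigr => q _; rewrite /u4; ring.
have sD : 0 <= \sum_p \sum_q u4 p q * ((p.1 == p.2) && (p.1 == q.1) && (p.1 == q.2))%:R.
  apply: sumr_ge0 => -[a b] _; apply: sumr_ge0 => -[c e] _ /=.
  have [<-|] := eqVneq a b; have [<-|] := eqVneq a c; have [<-|] := eqVneq a e => //= *;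
    rewrite ?mulr0 ?mulr1 /u4 //=.
  nra.
have E : \sum_p \sum_q u4 p q * Mc R d *
     ((p == q)%:R + ((p.2, p.1) == q)%:R + (p.1 == p.2)%:R * (q.1 == q.2)%:R
       - 2 * ((p.1 == p.2) && (p.1 == q.1) && (p.1 == q.2))%:R) =
   Mc R d * ((\sum_p \sum_q u4 p q * (p == q)%:R) + (\sum_p \sum_q u4 p q * ((p.2, p.1) == q)%:R)
     + (\sum_p \sum_q u4 p q * ((p.1 == p.2)%:R * (q.1 == q.2)%:R))
     - 2 * (\sum_p \sum_q u4 p q * ((p.1 == p.2) && (p.1 == q.1) && (p.1 == q.2))%:R)).
  rewrite !mulr_sumr -!big_split /= -!sumrN -big_split /= mulr_sumr; apply: eq_bigr => p _.
  rewrite !mulr_sumr -!big_split /= -!sumrN -big_split /= mulr_sumr; apply: eq_bigr => q _.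
  ring.
rewrite (etrans e1 E) sA sB sC.
have M0 : 0 <= Mc R d by rewrite /Mc ler0n.
have S0 : 0 <= (\sum_a u a ^+ 2) ^+ 2 by apply: sqr_ge0.
nra.
Qed.



Lemma exp_quad (R : realType) (y : R) : y <= 1/2 -> expR y <= 1 + y + 2 * y ^+ 2.
Proof.
move=> hy.
have h1 := expR_ge1Dx (- y).
have hp : 0 < expR (- y) by apply: expR_gt0.
have e : expR y = (expR (- y))^-1 by rewrite expRN invrK.
rewrite e.
have hq : 0 < 1 + y + 2 * y ^+ 2 by nra.
rewrite -[X in _ <= X]invrK lef_pV2 ?posrE ?invr_gt0 //.
rewrite -[_^-1]mul1r ler_pdivrMr //.
have : 1 <= (1 + - y) * (1 + y + 2 * y ^+ 2) by nra.
move=> h; apply: le_trans h _; apply: ler_wpM2r; [lra|lra].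
Qed.

Lemma chernoff (R : realType) (T : finType) (l : nat) (Z : T -> R) (B V t c : R) :
  (0 < #|T|)%N -> (forall s, `|Z s| <= B) -> \sum_s Z s ^+ 2 <= V * #|T|%:R ->
  0 <= t -> t * (2 * B) <= 1/2 ->
  \sum_(S : {ffun 'I_l -> T}) expR (t * \sum_r (Z (S r) - (\sum_s Z s) / #|T|%:R - c))
   <= #|T|%:R ^+ l * expR (l%:R * (2 * t ^+ 2 * V - t * c)).
Proof.
move=> T0 ZB ZV t0 tB.
set N : R := #|T|%:R.
have N0 : 0 < N by rewrite ltr0n.
set mu := (\sum_s Z s) / N.
have smu : \sum_s Z s = N * mu by rewrite /mu mulrC divfK // gt_eqF.
have B0 : 0 <= B.
  case/card_gt0P: T0 => s _; exact: le_trans (normr_ge0 _) (ZB s).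
have muB : `|mu| <= B.
  rewrite /mu normrM normfV (gtr0_norm N0) ler_pdivrMr //.
  apply: le_trans (ler_norm_sum _ _ _) _.
  apply: le_trans (ler_sum _ (fun s _ => ZB s)) _.
  by rewrite sumr_const -mulr_natl mulrC.
pose h s := expR (t * (Z s - mu - c)).
have e1 : forall S : {ffun 'I_l -> T},
    expR (t * \sum_r (Z (S r) - mu - c)) = \prod_r h (S r).
  by move=> S; rewrite mulr_sumr expR_sum.
rewrite (eq_bigr (fun S : {ffun 'I_l -> T} => \prod_r h (S r))); last by move=> S _; exact: e1 S.
rewrite -(bigA_distr_bigA (fun (r : 'I_l) (s : T) => h s)) /=.
rewrite prodr_const card_ord.
have hs : \sum_s h s <= N * expR (2 * t ^+ 2 * V - t * c).
  have step : forall s, h s <= expR (- (t * c)) *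
       (1 + t * (Z s - mu) + 2 * t ^+ 2 * (Z s - mu) ^+ 2).
    move=> s; rewrite /h.
    have -> : t * (Z s - mu - c) = t * (Z s - mu) + - (t * c) by ring.
    rewrite expRD mulrC ler_wpM2l ?expR_ge0 //.
    have hz : `|Z s - mu| <= 2 * B.
      apply: le_trans (ler_normB _ _) _; have := ZB s; lra.
    have : t * (Z s - mu) <= 1/2.
      apply: le_trans tB; rewrite ler_wpM2l //.
      exact: le_trans (ler_norm _) hz.
    move/exp_quad; rewrite exprMn; lra.
  apply: le_trans (ler_sum _ (fun s _ => step s)) _.
  have cN : forall x : R, \sum_(s : T) x = N * x.
    by move=> x; rewrite sumr_const -mulr_natl.
  have sz : \sum_s (Z s - mu) = 0.
    by rewrite big_split /= sumrN smu cN subrr.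
  have sq : \sum_s (Z s - mu) ^+ 2 <= V * N.
    have -> : \sum_s (Z s - mu) ^+ 2 = \sum_s Z s ^+ 2 - N * mu ^+ 2.
      rewrite (eq_bigr (fun s => Z s ^+ 2 + ((- (2 * mu)) * Z s + mu ^+ 2))); last by move=> s _; ring.
      rewrite !big_split /= -mulr_sumr smu cN; ring.
    have : 0 <= N * mu ^+ 2 by apply: mulr_ge0; [lra|apply: sqr_ge0].
    lra.
  rewrite -mulr_sumr !big_split /= -mulr_sumr -mulr_sumr sz cN mulr0 addr0 mulr1.
  have e0 : 0 < expR (- (t * c)) by apply: expR_gt0.
  have k : N + 2 * t ^+ 2 * \sum_i (Z i - mu) ^+ 2 <= N * expR (2 * t ^+ 2 * V).
    have := expR_ge1Dx (2 * t ^+ 2 * V).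
    have : 0 <= 2 * t ^+ 2 by apply: mulr_ge0; [lra|apply: sqr_ge0].
    nra.
  rewrite (expRD (2 * t ^+ 2 * V) (- (t * c))).
  apply: le_trans (ler_wpM2l (ltW e0) k) _.
  have -> : N * (expR (2 * t ^+ 2 * V) * expR (- (t * c))) = expR (- (t * c)) * (N * expR (2 * t ^+ 2 * V)) by ring.
  by [].
have hs0 : 0 <= \sum_s h s by apply: sumr_ge0 => s _; apply: expR_ge0.
apply: le_trans (lerXn2r l _ _ hs) _; rewrite ?nnegrE //.
  by apply: mulr_ge0; [lra|apply: expR_ge0].
by rewrite exprMn expRM_natl.
Qed.



Definition fT {R : realType} (T2 x : R) : R := if x ^+ 2 <= T2 then x else 0.

Lemma fT_sq (R : realType) (T2 x : R) : fT T2 x ^+ 2 <= x ^+ 2.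
Proof. rewrite /fT; case: ifP => _ //; rewrite expr0n /=; apply: sqr_ge0. Qed.

Lemma fT_sqT (R : realType) (T2 x : R) : 0 <= T2 -> fT T2 x ^+ 2 <= T2.
Proof. by rewrite /fT; case: ifP => // _; rewrite expr0n. Qed.

Lemma big_bound (R : realType) (T2 x y : R) : 0 < T2 -> T2 < x ^+ 2 ->
  `|x * y| <= 2 * (x ^+ 4 + y ^+ 4) / T2.
Proof.
move=> T0 hx.
have hq : 2 * (x ^+ 4 + y ^+ 4) / T2 * T2 = 2 * (x ^+ 4 + y ^+ 4) by rewrite divfK // gt_eqF.
move: hq; set q := 2 * (x ^+ 4 + y ^+ 4) / T2 => hq.
rewrite ler_norml.
have h1 : T2 * x ^+ 2 <= x ^+ 4.
  by rewrite (_ : 4 = 2 + 2)%N // exprD ler_wpM2r // ?sqr_ge0 // ltW.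
have h2 : T2 * y ^+ 2 <= x ^+ 2 * y ^+ 2 by rewrite ler_wpM2r // ?sqr_ge0 // ltW.
have h3 : x ^+ 2 * y ^+ 2 <= (x ^+ 4 + y ^+ 4) / 2.
  have : 0 <= (x ^+ 2 - y ^+ 2) ^+ 2 by apply: sqr_ge0.
  rewrite (_ : 4 = 2 * 2)%N // !exprM; lra.
have h4 : - ((x ^+ 2 + y ^+ 2) / 2) <= x * y <= (x ^+ 2 + y ^+ 2) / 2.
  have : 0 <= (x - y) ^+ 2 by apply: sqr_ge0.
  have : 0 <= (x + y) ^+ 2 by apply: sqr_ge0.
  rewrite !expr2; move=> *; apply/andP; split; nra.
have y4 : 0 <= y ^+ 4 by rewrite (_ : 4 = 2 * 2)%N // exprM sqr_ge0.
case/andP: h4 => h4 h5.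
have hs : (x ^+ 2 + y ^+ 2) / 2 <= q.
  have x4 : 0 <= x ^+ 4 by rewrite (_ : 4 = 2 * 2)%N // exprM sqr_ge0.
  rewrite -(ler_pM2r T0) hq.
  have -> : (x ^+ 2 + y ^+ 2) / 2 * T2 = (T2 * x ^+ 2 + T2 * y ^+ 2) / 2 by ring.
  lra.
apply/andP; split; lra.
Qed.

Lemma bias_pt (R : realType) (T2 x y : R) : 0 < T2 ->
  `|x * y - fT T2 x * fT T2 y| <= 2 * (x ^+ 4 + y ^+ 4) / T2.
Proof.
move=> T0.
have x4 : 0 <= x ^+ 4 by rewrite (_ : 4 = 2 * 2)%N // exprM sqr_ge0.
have y4 : 0 <= y ^+ 4 by rewrite (_ : 4 = 2 * 2)%N // exprM sqr_ge0.
have R0 : 0 <= 2 * (x ^+ 4 + y ^+ 4) / T2.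
  by apply: divr_ge0; [lra|exact: ltW].
rewrite /fT; case: ifP => hx; case: ifP => hy.
- by rewrite subrr normr0.
- by rewrite mulr0 subr0 mulrC [x ^+ 4 + _]addrC; apply: big_bound; rewrite // ltNge hy.
- by rewrite mul0r subr0; apply: big_bound; rewrite // ltNge hx.
- by rewrite mul0r subr0; apply: big_bound; rewrite // ltNge hx.
Qed.



Lemma abs_prod_le (R : realType) (a b : R) : `|a * b| <= (a ^+ 2 + b ^+ 2) / 2.
Proof.
rewrite ler_norml.
have : 0 <= (a - b) ^+ 2 by apply: sqr_ge0.
have : 0 <= (a + b) ^+ 2 by apply: sqr_ge0.
rewrite !expr2 => *; apply/andP; split; nra.
Qed.

Lemma sq_prod_le (R : realType) (a b : R) : a ^+ 2 * b ^+ 2 <= (a ^+ 4 + b ^+ 4) / 2.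
Proof.
have : 0 <= (a ^+ 2 - b ^+ 2) ^+ 2 by apply: sqr_ge0.
rewrite (_ : 4 = 2 * 2)%N // !exprM; lra.
Qed.

Lemma sum_shift (R : realType) l (F : 'I_l -> R) (m c : R) :
  \sum_r (F r - m - c) = \sum_r (F r - m) - l%:R * c.
Proof. by rewrite [LHS]sumrB sumr_const card_ord mulr_natl. Qed.

Lemma sum_shiftN (R : realType) l (F : 'I_l -> R) (m c : R) :
  \sum_r (- F r - (- m) - c) = - \sum_r (F r - m) - l%:R * c.
Proof.
rewrite sum_shift -sumrN; congr (_ - _); apply: eq_bigr => r _; ring.
Qed.

Lemma eqle (R : realType) (x y : R) : x = y -> x <= y.
Proof. by move->. Qed.

Lemma core (R : realType) (I : finType) (d l : nat) (w : I -> 'I_d -> R) (del : R) :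
  0 < del -> del <= 1 -> (0 < l)%N -> (forall p, \sum_a w p a ^+ 2 <= 1) ->
  #|I|%:R ^+ 2 * 2 * expR (- (l%:R * (7 * del ^+ 2 / 1536))) < 1 ->
  exists S : {ffun 'I_l -> {ffun 'I_d -> bool}}, forall p q,
    `| (\sum_r fT (24 / del) (Xs (w p) (S r)) * fT (24 / del) (Xs (w q) (S r))) / l%:R
        - \sum_a w p a * w q a | <= del.
Proof.
move=> d0 d1 l0 wn hU.
set T2 := 24 / del.
have T0 : 0 < T2 by rewrite /T2 divr_gt0.
set M := Mc R d.
have M0 : 0 < M by rewrite /M /Mc card_ffun card_bool ltr0n expn_gt0.
pose Z p q s := fT T2 (Xs (w p) s) * fT T2 (Xs (w q) s).
pose mu p q := (\sum_s Z p q s) / M.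
have X4 : forall p, \sum_s Xs (w p) s ^+ 4 <= 3 * M.
  move=> p; apply: le_trans (@M4 R d (w p)) _.
  have h0 : 0 <= \sum_a w p a ^+ 2 by apply: sumr_ge0 => a _; apply: sqr_ge0.
  have h1 := wn p.
  have : (\sum_a w p a ^+ 2) ^+ 2 <= 1 by rewrite expr2; nra.
  rewrite -/M => h; nra.
have ZB : forall p q s, `|Z p q s| <= T2.
  move=> p q s; apply: le_trans (@abs_prod_le R _ _) _.
  have := @fT_sqT R T2 (Xs (w p) s) (ltW T0); have := @fT_sqT R T2 (Xs (w q) s) (ltW T0); lra.
have ZV : forall p q, \sum_s Z p q s ^+ 2 <= 3 * M.
  move=> p q.
  have pt : forall s, Z p q s ^+ 2 <= (Xs (w p) s ^+ 4 + Xs (w q) s ^+ 4) / 2.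
    move=> s; apply: le_trans (@sq_prod_le R _ _); rewrite /Z exprMn.
    apply: ler_pM; rewrite ?sqr_ge0 //; apply: fT_sq.
  apply: le_trans (ler_sum _ (fun s _ => pt s)) _.
  rewrite -mulr_suml big_split /=.
  have := X4 p; have := X4 q; lra.
have bias : forall p q, `|mu p q - \sum_a w p a * w q a| <= del / 2.
  move=> p q.
  have e2 := @M2 R d (w p) (w q).
  have eq : mu p q - \sum_a w p a * w q a =
      - (\sum_s (Xs (w p) s * Xs (w q) s - Z p q s)) / M.
    rewrite sumrB e2 /mu -/M; field; lra.
  have hsum : `|\sum_s (Xs (w p) s * Xs (w q) s - Z p q s)| <= 2 * (3 * M + 3 * M) / T2.
    apply: le_trans (ler_norm_sum _ _ _) _.
    apply: le_trans (ler_sum _ (fun s _ => @bias_pt R T2 (Xs (w p) s) (Xs (w q) s) T0)) _.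
    rewrite -mulr_suml -mulr_sumr big_split /=.
    apply: ler_wpM2r; first by rewrite invr_ge0 ltW.
    have := X4 p; have := X4 q; lra.
  rewrite eq normrM normrN normfV (gtr0_norm M0) ler_pdivrMr //.
  apply: le_trans hsum _.
  have -> : 2 * (3 * M + 3 * M) / T2 = del / 2 * M by rewrite /T2; field; lra.
  by [].
pose t := del / 96.
pose c := del / 2.
pose D (S : {ffun 'I_l -> {ffun 'I_d -> bool}}) (pq : I * I) :=
  \sum_r (Z pq.1 pq.2 (S r) - mu pq.1 pq.2).
pose e := expR (- (l%:R * (7 * del ^+ 2 / 1536))).
have ex : 2 * t ^+ 2 * 3 - t * c = - (7 * del ^+ 2 / 1536) by rewrite /t /c; field.
have t0 : 0 <= t by rewrite /t; lra.
have tB : t * (2 * T2) <= 1 / 2 by apply: eqle; rewrite /t /T2; field; lra.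
have card0 : (0 < #|{ffun 'I_d -> bool}|)%N by rewrite card_ffun card_bool expn_gt0.
have CP : forall pq, \sum_S expR (t * (D S pq - l%:R * c)) <= M ^+ l * e.
  move=> pq.
  have := @chernoff R {ffun 'I_d -> bool} l (Z pq.1 pq.2) T2 3 t c card0
     (ZB pq.1 pq.2) (ZV pq.1 pq.2) t0 tB.
  rewrite ex mulrN -/M => h; apply: le_trans h; apply: eqle.
  apply: eq_bigr => S _; congr expR; congr (t * _).
  by rewrite sum_shift.
have CM : forall pq, \sum_S expR (t * (- D S pq - l%:R * c)) <= M ^+ l * e.
  move=> pq.
  have ZB' : forall s, `|(fun s => - Z pq.1 pq.2 s) s| <= T2 by move=> s /=; rewrite normrN.
  have ZV' : \sum_s (fun s => - Z pq.1 pq.2 s) s ^+ 2 <= 3 * M.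
    by under eq_bigr do rewrite sqrrN; apply: ZV.
  have := @chernoff R {ffun 'I_d -> bool} l (fun s => - Z pq.1 pq.2 s) T2 3 t c card0
     ZB' ZV' t0 tB.
  rewrite ex mulrN -/M => h; apply: le_trans h; apply: eqle.
  apply: eq_bigr => S _; congr expR; congr (t * _).
  by rewrite sumrN mulNr sum_shiftN.
have e0 : 0 < e by apply: expR_gt0.
have Ml : 0 < M ^+ l by apply: exprn_gt0.
have [S hS] : exists S, forall pq : I * I, `|D S pq| <= l%:R * c.
  case: (boolP [exists S, [forall pq : I * I, `|D S pq| <= l%:R * c]]).
    by move/existsP => [S /forallP H]; exists S.
  rewrite negb_exists => /forallP H; exfalso.
  pose F S pq := expR (t * (D S pq - l%:R * c)) + expR (t * (- D S pq - l%:R * c)).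
  have F0 : forall S pq, 0 <= F S pq by move=> S pq; apply: addr_ge0; apply: expR_ge0.
  have all1 : forall S, 1 <= \sum_pq F S pq.
    move=> S; move: (H S); rewrite negb_forall => /existsP [pq]; rewrite -ltNge => hb.
    rewrite (bigD1 pq) //=.
    have : 0 <= \sum_(i | i != pq) F S i by apply: sumr_ge0 => i _.
    suff : 1 <= F S pq by lra.
    rewrite /F.
    have ge1 : forall y : R, 0 <= y -> 1 <= expR y.
      by move=> y y0; apply: le_trans (expR_ge1Dx y); lra.
    move: hb; rewrite ltr_normr => /orP [hb|hb].
      have : 1 <= expR (t * (D S pq - l%:R * c)) by apply: ge1; apply: mulr_ge0; lra.
      have := expR_ge0 (t * (- D S pq - l%:R * c)); lra.
    have : 1 <= expR (t * (- D S pq - l%:R * c)) by apply: ge1; apply: mulr_ge0; lra.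
    have := expR_ge0 (t * (D S pq - l%:R * c)); lra.
  have h1 : M ^+ l <= \sum_(pq : I * I) (M ^+ l * e + M ^+ l * e).
    apply: le_trans (_ : \sum_(S : {ffun 'I_l -> {ffun 'I_d -> bool}}) \sum_(pq : I * I) F S pq <= _).
      apply: le_trans (ler_sum _ (fun S _ => all1 S)).
      apply: eqle; rewrite sumr_const card_ffun card_ord -/M natrX. by [].
    rewrite exchange_big /=; apply: ler_sum => pq _.
    rewrite big_split /=; apply: lerD; [exact: CP|exact: CM].
  move: h1; rewrite sumr_const card_prod -mulr_natl natrM.
  have : #|I|%:R * #|I|%:R * 2 * e < 1 by rewrite -expr2.
  nra.
exists S => p q.
have hD := hS (p, q); rewrite /D /= in hD.
have l0' : 0 < l%:R :> R by rewrite ltr0n.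
have eqa : (\sum_r Z p q (S r)) / l%:R - mu p q = (\sum_r (Z p q (S r) - mu p q)) / l%:R.
  rewrite sumrB sumr_const card_ord -mulr_natl; field; lra.
have h1 : `|(\sum_r Z p q (S r)) / l%:R - mu p q| <= c.
  by rewrite eqa normrM normfV (gtr0_norm l0') ler_pdivrMr // mulrC.
have h2 := bias p q.
rewrite -/(Z p q _).
have := ler_normD ((\sum_r Z p q (S r)) / l%:R - mu p q) (mu p q - \sum_a w p a * w q a).
rewrite /c in h1.
have -> : (\sum_r Z p q (S r)) / l%:R - mu p q + (mu p q - \sum_a w p a * w q a) =
   (\sum_r Z p q (S r)) / l%:R - \sum_a w p a * w q a by ring.
lra.
Qed.



Lemma norm12_ge0 (R : realType) m n (A : 'M[R]_(m, n)) : 0 <= norm12 A.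
Proof.
rewrite /norm12; apply: (big_ind (fun x : R => 0 <= x)) => // x y hx hy.
by rewrite le_max hx.
Qed.

Lemma col_le (R : realType) m n (A : 'M[R]_(m, n)) j :
  Num.sqrt (\sum_i A i j ^+ 2) <= norm12 A.
Proof. exact: (le_bigmax 0 (fun j => Num.sqrt (\sum_i A i j ^+ 2)) j). Qed.

Lemma norm12_le (R : realType) m n (A : 'M[R]_(m, n)) (B : R) :
  0 <= B -> (forall j, Num.sqrt (\sum_i A i j ^+ 2) <= B) -> norm12 A <= B.
Proof. by move=> B0 h; rewrite /norm12; apply: bigmax_le. Qed.

Lemma col_sq_le (R : realType) m n (A : 'M[R]_(m, n)) j :
  \sum_i A i j ^+ 2 <= norm12 A ^+ 2.
Proof.
have h0 : 0 <= \sum_i A i j ^+ 2 by apply: sumr_ge0 => i _; apply: sqr_ge0.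
rewrite -(sqr_sqrtr h0); apply: lerXn2r; rewrite ?nnegrE ?sqrtr_ge0 ?norm12_ge0 //.
exact: col_le.
Qed.

Lemma ln_ge_half (R : realType) (k : nat) : (2 <= k)%N -> 1 / 2 <= ln (k%:R : R).
Proof.
move=> hk.
have e1 : expR (1 / 2 : R) <= 2.
  have h := expR_ge1Dx (- (1 / 2) : R).
  have p : 0 < expR (1 / 2 : R) by apply: expR_gt0.
  rewrite expRN in h.
  have q : expR (1/2 : R) * (expR (1/2 : R))^-1 = 1 by rewrite mulfV // gt_eqF.
  nra.
have k2 : (2 : R) <= k%:R by rewrite ler_nat.
rewrite -[X in X <= _](expRK (1 / 2 : R)) ler_ln ?posrE ?expR_gt0 //; last by lra.
lra.
Qed.

Lemma hU_lem (R : realType) (k l : nat) (del X : R) : (2 <= k)%N -> 0 < del ->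
  X = 1100 * ln (k%:R : R) / del ^+ 2 -> X < l%:R -> 1 / 2 <= ln (k%:R : R) ->
  #|{: 'I_k + 'I_k}|%:R ^+ 2 * 2 * expR (- (l%:R * (7 * del ^+ 2 / 1536))) < 1.
Proof.
move=> hk d0 hX lX lnk.
have K2 : (2 : R) <= k%:R by rewrite ler_nat.
  have hx : X * (7 * del ^+ 2 / 1536) = 7700 / 1536 * ln (k%:R : R).
    rewrite hX; field; by rewrite gt_eqF.
  have hexp : expR (- (l%:R * (7 * del ^+ 2 / 1536))) < expR (- (5%:R * ln (k%:R : R))).
    rewrite ltr_expR ltrN2.
    have d2 : 0 < del ^+ 2 by apply: exprn_gt0.
    have c0 : 0 < 7 * del ^+ 2 / 1536 by rewrite divr_gt0 ?mulr_gt0 ?ltr0n.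
    have h : X * (7 * del ^+ 2 / 1536) < l%:R * (7 * del ^+ 2 / 1536) by rewrite ltr_pM2r.
    rewrite hx in h.
    have h5 : 5%:R * ln (k%:R : R) <= 7700 / 1536 * ln (k%:R : R).
      apply: ler_wpM2r; first by apply: le_trans lnk; rewrite divr_ge0 ?ler0n.
      by rewrite ler_pdivlMr ?ltr0n // -natrM ler_nat.
    exact: le_lt_trans h5 h.
  have k0 : (0 < k)%N by apply: ltn_trans hk.
  have e5 : expR (- (5%:R * ln (k%:R : R))) = (k%:R ^+ 5)^-1.
    by rewrite expRN expRM_natl lnK // posrE ltr0n.
  rewrite e5 in hexp; rewrite card_sum card_ord natrD.
  set K : R := k%:R in K2 hexp *.
  have K0 : 0 < K by rewrite /K ltr0n.
  have K5 : 0 < K ^+ 5 by apply: exprn_gt0.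
  have hb : (K + K) ^+ 2 * 2 * (K ^+ 5)^-1 <= 1.
    rewrite ler_pdivrMr // mul1r.
    have -> : K ^+ 5 = K ^+ 2 * (K * K * K) by ring.
    have K4 : 2 * 2 <= K * K by apply: ler_pM; rewrite ?ler0n.
    have K8 : 2 * 2 * 2 <= K * K * K by apply: ler_pM; rewrite ?mulr_ge0 ?ler0n.
    have -> : (K + K) ^+ 2 * 2 = K ^+ 2 * (2 * 2 * 2) by ring.
    by apply: ler_wpM2l; [apply: sqr_ge0|].
  have p0 : 0 < (K + K) ^+ 2 * 2 by rewrite mulr_gt0 ?exprn_gt0 ?addr_gt0 ?ltr0n.
  apply: lt_le_trans hb; rewrite ltr_pM2l //.
Qed.

Lemma lin3 (R : realType) (x y d : R) : x - y <= d -> y <= 1 -> d <= 1 -> x <= 2.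
Proof. lra. Qed.

Lemma colb (R : realType) l (F : 'I_l -> R) (c sl y del : R) :
  0 < c -> 0 < sl -> sl ^+ 2 = l%:R -> y <= 1 -> del <= 1 ->
  `|(\sum_r F r * F r) / l%:R - y| <= del ->
  Num.sqrt (\sum_r (c * F r / sl) ^+ 2) <= c * Num.sqrt 2.
Proof.
move=> c0 sl0 sl2 y1 d1 hv.
have c2 : 0 <= 2 * c ^+ 2 by rewrite mulr_ge0 ?ler0n ?sqr_ge0.
have e1 : c * Num.sqrt 2 = Num.sqrt (2 * c ^+ 2).
  by rewrite sqrtrM ?ler0n // sqrtr_sqr (gtr0_norm c0) mulrC.
rewrite e1.
rewrite (ler_sqrt _ c2).
have e2 : \sum_r (c * F r / sl) ^+ 2 = c ^+ 2 * ((\sum_r F r * F r) / l%:R).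
  rewrite -sl2 mulr_suml mulr_sumr; apply: eq_bigr => r _; field; by rewrite gt_eqF.
rewrite e2.
rewrite mulrC; apply: ler_wpM2r; first exact: sqr_ge0.
move: hv; rewrite ler_norml => /andP [_ hv].
exact: lin3 hv y1 d1.
Qed.

Theorem mainTheorem6 (R : realType) :
  exists C1 C2 : R, 0 < C1 /\ 0 < C2 /\
  forall (k : nat) (W : 'M[R]_k) (alpha : R),
    (2 <= k)%N -> 0 < alpha -> alpha < gamma2 W ->
    exists l : nat,
      (l%:R <= C1 * gamma2 W ^+ 2 * ln (k%:R : R) / alpha ^+ 2) /\
      (gamma2la l W alpha <= (C2 * gamma2 W)%:E)%E.
Proof.
exists 8800, 4; split; first lra; split; first lra.
move=> k W alpha hk ha hag.
set g := gamma2 W.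
have g0 : 0 < g by lra.
pose Sg := [set x : R | exists (l : nat) (L Rm : 'M[R]_(l, k)),
         L^T *m Rm = W /\ x = norm12 L * norm12 Rm]%classic.
have gdef : g = inf Sg by [].
have ne : (Sg !=set0)%classic.
  exists (norm12 (1%:M : 'M[R]_k) * norm12 W); exists k, 1%:M, W; split => //.
  by rewrite trmx1 mul1mx.
have lb : has_lbound Sg.
  exists 0 => x [l [L [Rm [_ ->]]]]; apply: mulr_ge0; apply: norm12_ge0.
have hlt : inf Sg < 2 * g by rewrite -gdef; lra.
have [y [dd [L [Rm [hLR ey]]]] hy] := inf_lt ne hlt.
set a := norm12 L in ey; set b := norm12 Rm in ey.
have gab : g <= a * b.
  rewrite gdef; apply: (ge_inf lb); exists dd, L, Rm; split => //.
have a0 : 0 <= a by apply: norm12_ge0.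
have b0 : 0 <= b by apply: norm12_ge0.
have ap : 0 < a.
  rewrite lt_neqAle a0 andbT; apply/eqP => a0'; move: gab; rewrite -a0' mul0r; lra.
have bp : 0 < b.
  rewrite lt_neqAle b0 andbT; apply/eqP => b0'; move: gab; rewrite -b0' mulr0; lra.
have ab2 : a * b < 2 * g by rewrite -ey.
pose del := alpha / (2 * g).
have d0 : 0 < del by rewrite /del divr_gt0 // mulr_gt0.
have d1 : del <= 1 / 2.
  rewrite /del ler_pdivrMr ?mulr_gt0 //; lra.
pose w (p : ('I_k + 'I_k)%type) : 'I_dd -> R :=
  match p with inl i => fun r => L r i / a | inr j => fun r => Rm r j / b end.
have wn : forall p, \sum_r w p r ^+ 2 <= 1.
  case=> [i|j] /=.
  - rewrite (eq_bigr (fun r => L r i ^+ 2 / a ^+ 2)); last by move=> r _; rewrite expr_div_n.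
    rewrite -mulr_suml ler_pdivrMr ?exprn_gt0 // mul1r; exact: col_sq_le.
  - rewrite (eq_bigr (fun r => Rm r j ^+ 2 / b ^+ 2)); last by move=> r _; rewrite expr_div_n.
    rewrite -mulr_suml ler_pdivrMr ?exprn_gt0 // mul1r; exact: col_sq_le.
have lnk := @ln_ge_half R k hk.
pose X := 1100 * ln (k%:R : R) / del ^+ 2.
have X1 : 1 <= X.
  rewrite /X ler_pdivlMr ?exprn_gt0 // mul1r.
  have : del ^+ 2 <= 1 by rewrite expr2; nra.
  lra.
pose l := (Num.truncn X).+1.
have lX : X < l%:R by apply: truncnS_gt.
have lX2 : l%:R <= X + 1.
  by rewrite /l -natr1 lerD2r truncn_le; lra.
have lpos : (0 < l)%N by [].
have K2 : (2 : R) <= k%:R by rewrite ler_nat.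
have hU : #|{: 'I_k + 'I_k}|%:R ^+ 2 * 2 * expR (- (l%:R * (7 * del ^+ 2 / 1536))) < 1.
  exact: (@hU_lem R k l del X hk d0 erefl lX lnk).
have d1' : del <= 1 by apply: le_trans d1 _; rewrite ler_pdivrMr ?ltr0n // mul1r ler1n.
have [S hS] := @core R {: 'I_k + 'I_k} dd l w del d0 d1' lpos wn hU.
set f := fT (24 / del) in hS.
pose sl := Num.sqrt (l%:R : R).
have sl0 : 0 < sl by rewrite sqrtr_gt0 ltr0n.
have sl2 : sl ^+ 2 = l%:R by rewrite sqr_sqrtr // ler0n.
pose L' : 'M[R]_(l, k) := \matrix_(r, i) (a * f (Xs (w (inl i)) (S r)) / sl).
pose R' : 'M[R]_(l, k) := \matrix_(r, j) (b * f (Xs (w (inr j)) (S r)) / sl).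
pose Wt := L'^T *m R'.
have Wte : forall i j, Wt i j =
    a * b * ((\sum_r f (Xs (w (inl i)) (S r)) * f (Xs (w (inr j)) (S r))) / l%:R).
  move=> i j; rewrite /Wt !mxE -sl2 mulr_suml mulr_sumr; apply: eq_bigr => r _.
  rewrite !mxE; field; by rewrite gt_eqF.
have We : forall i j, W i j = a * b * \sum_r w (inl i) r * w (inr j) r.
  move=> i j; rewrite -hLR !mxE mulr_sumr; apply: eq_bigr => r _; rewrite !mxE /=.
  field; by rewrite !gt_eqF.
have near : forall i j, `|Wt i j - W i j| <= alpha.
  move=> i j; rewrite Wte We -mulrBr normrM (ger0_norm (mulr_ge0 a0 b0)).
  have h := hS (inl i) (inr j).
  apply: le_trans (ler_wpM2l (mulr_ge0 a0 b0) h) _.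
  have -> : alpha = 2 * g * del by rewrite /del; field; rewrite gt_eqF.
  by apply: ler_wpM2r; [exact: ltW|exact: ltW].
have s2 : 0 <= Num.sqrt (2 : R) by apply: sqrtr_ge0.
have nL : norm12 L' <= a * Num.sqrt 2.
  apply: norm12_le; first by rewrite mulr_ge0.
  move=> i; rewrite (eq_bigr (fun r => (a * f (Xs (w (inl i)) (S r)) / sl) ^+ 2)); last first.
    by move=> r _; rewrite mxE.
  have e : \sum_a w (inl i) a * w (inl i) a = \sum_r w (inl i) r ^+ 2 by apply: eq_bigr => r _; rewrite expr2.
  have := hS (inl i) (inl i); rewrite e => hv.
  exact: colb ap sl0 sl2 (wn (inl i)) d1' hv.
have nR : norm12 R' <= b * Num.sqrt 2.
  apply: norm12_le; first by rewrite mulr_ge0.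
  move=> j; rewrite (eq_bigr (fun r => (b * f (Xs (w (inr j)) (S r)) / sl) ^+ 2)); last first.
    by move=> r _; rewrite mxE.
  have e : \sum_a w (inr j) a * w (inr j) a = \sum_r w (inr j) r ^+ 2 by apply: eq_bigr => r _; rewrite expr2.
  have := hS (inr j) (inr j); rewrite e => hv.
  exact: colb bp sl0 sl2 (wn (inr j)) d1' hv.
exists l; split.
  apply: le_trans lX2 _.
  have eqX : 8800 * g ^+ 2 * ln (k%:R : R) / alpha ^+ 2 = X + X.
    rewrite /X /del; field; by rewrite !gt_eqF.
  by rewrite eqX lerD2l.
apply: (@le_trans _ _ (gamma2l l Wt)).
  by rewrite /gamma2la; apply: ereal_inf_lbound; exists Wt.
apply: (@le_trans _ _ (norm12 L' * norm12 R')%:E).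
  by rewrite /gamma2l; apply: ereal_inf_lbound; exists L', R'.
rewrite lee_fin.
apply: le_trans (ler_pM (@norm12_ge0 R _ _ L') (@norm12_ge0 R _ _ R') nL nR) _.
have -> : a * Num.sqrt 2 * (b * Num.sqrt 2) = a * b * (Num.sqrt 2) ^+ 2 by ring.
rewrite sqr_sqrtr; last by rewrite ler0n.
have : a * b * 2 <= 2 * g * 2 by rewrite ler_wpM2r ?ler0n // ltW.
have -> : (4 : R) * g = 2 * g * 2 by ring.
by [].
Qed.
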